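(* Let $m\ge3$, $C$ a set of $m$ candidates, $T$ the set of all $m!$ strict rankings of $C$, $w=(w_1,\dots,w_m)$ with $1=w_1\ge\cdots\ge w_m=0$, $\bar w=(w_1+\cdots+w_m)/m$, and $\sigma_t(\alpha)=w_i$ where $i$ is the position of $\alpha$ in $t\in T$. Let $(N_t)_{t\in T}$ be nonnegative integers with $\sum_tN_t=n$ and $|\alpha|=\sum_tN_t\sigma_t(\alpha)$. Suppose $|a|>|\alpha|$ for all $\alpha\ne a$, and $b\ne a$ satisfies $|b|\ge|\alpha|$ for all $\alpha\ne a$. Let $T_b$ be the set of types ranking $b$ first, $T_i$ ($1\le i\le m-1$) the set of types ranking $b$ in position $i$ and $a$ in position $i+1$, and $T_{ba}=\bigcup_{i=1}^{m-1}T_i$. Suppose nonnegative reals $z_1,\dots,z_{m-1}$ satisfy $$\sum_{i=1}^{m-1}z_i(1-w_i+w_{i+1})\ge|a|-|b|,\qquad \sum_{i=1}^{m-1}z_i(1-w_i)\ge n\bar w-|b|.$$ Then there exist reals $x_t\ge0$ ($t\in T_{ba}$) and $y_t\ge0$ ($t\in T_b$) with $\sum_{t\in T_i}x_t=z_i$ for each $i=1,\dots,m-1$, $\sum_{t\in T_b}y_t=\sum_{t\in T_{ba}}x_t$, and $$\sum_{t\in T_b}y_t(1-\sigma_t(\alpha))-\sum_{t\in T_{ba}}x_t(\sigma_t(b)-\sigma_t(\alpha))\ge|\alpha|-|b|\quad\text{for all }\alpha\ne b.$$ *)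

(* Defs.v *)
From HB Require Import structures.
From mathcomp Require Import all_boot all_order all_fingroup all_algebra.
From mathcomp Require Import reals.
Set Implicit Arguments. Unset Strict Implicit. Unset Printing Implicit Defensive.
Import Order.TTheory GRing.Theory Num.Theory.
Local Open Scope ring_scope.

(* A type (strict ranking) t : {perm 'I_m} maps a
   candidate to its position, positions being 0-based (position 0 = first).
   Weights w : nat -> R, w k = weight of 0-based position k (paper's w_{k+1}). *)

Definition sigma (R : pzRingType) (m : nat) (w : nat -> R) (t : {perm 'I_m})
  (al : 'I_m) : R := w (t al).

Definition score (R : pzRingType) (m : nat) (w : nat -> R)
  (N : {perm 'I_m} -> nat) (al : 'I_m) : R :=
  \sum_(t : {perm 'I_m}) (N t)%:R * sigma w t al.

Definition wbar (R : fieldType) (m : nat) (w : nat -> R) : R :=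
  (\sum_(i < m) w i) / m%:R.

(* Main.v *)
Require Import Defs.
From HB Require Import structures.
From mathcomp Require Import all_boot all_order all_fingroup all_algebra.
From mathcomp Require Import reals.
From mathcomp Require Import ring lra zify.
Import Order.TTheory GRing.Theory Num.Theory.
Local Open Scope ring_scope.
Set Implicit Arguments. Unset Strict Implicit. Unset Printing Implicit Defensive.

Section S.
Variable (R : realType) (m : nat) (w : nat -> R) (a b : 'I_m) (z : nat -> R).

Definition LL (x y : {perm 'I_m} -> R) (al : 'I_m) : R :=
  \sum_(t : {perm 'I_m} | nat_of_ord (t b) == 0%N) y t * (1 - sigma w t al)
  - \sum_(t : {perm 'I_m} | nat_of_ord (t a) == (t b).+1) x t * (sigma w t b - sigma w t al).

Definition Good (k : R) (c : 'I_m -> R) := exists x y : {perm 'I_m} -> R,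
    (forall t : {perm 'I_m}, nat_of_ord (t a) = (t b).+1 -> 0 <= x t) /\
    (forall t : {perm 'I_m}, nat_of_ord (t b) = 0%N -> 0 <= y t) /\
    (forall i : nat, (i < m.-1)%N ->
       \sum_(t : {perm 'I_m} | (nat_of_ord (t b) == i) && (nat_of_ord (t a) == i.+1)) x t = k * z i) /\
    \sum_(t : {perm 'I_m} | nat_of_ord (t b) == 0%N) y t
      = \sum_(t : {perm 'I_m} | nat_of_ord (t a) == (t b).+1) x t /\
    (forall al : 'I_m, al != b -> c al <= LL x y al).

Lemma LL_add x1 y1 x2 y2 al :
  LL (fun t => x1 t + x2 t) (fun t => y1 t + y2 t) al = LL x1 y1 al + LL x2 y2 al.
Proof.
rewrite /LL.
have -> : forall (P : pred {perm 'I_m}) (f g h : {perm 'I_m} -> R),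
  \sum_(t | P t) (f t + g t) * h t = \sum_(t | P t) f t * h t + \sum_(t | P t) g t * h t.
  by move=> P f g h; rewrite -big_split; apply: eq_bigr => t _; rewrite mulrDl.
rewrite (_ : forall (P : pred {perm 'I_m}) (f g h : {perm 'I_m} -> R),
  \sum_(t | P t) (f t + g t) * h t = \sum_(t | P t) f t * h t + \sum_(t | P t) g t * h t); last first.
  by move=> P f g h; rewrite -big_split; apply: eq_bigr => t _; rewrite mulrDl.
lra.
Qed.

Lemma LL_scale r x y al :
  LL (fun t => r * x t) (fun t => r * y t) al = r * LL x y al.
Proof.
rewrite /LL mulrBr !mulr_sumr; congr (_ - _); apply: eq_bigr => t _; by rewrite mulrA.
Qed.

Lemma good_mono k c c' : Good k c -> (forall al, al != b -> c' al <= c al) -> Good k c'.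
Proof.
move=> [x [y [h1 [h2 [h3 [h4 h5]]]]]] hc; exists x, y; do 4 split => //.
by move=> al hal; apply: le_trans (hc _ hal) (h5 _ hal).
Qed.

Lemma good_add k1 c1 k2 c2 : Good k1 c1 -> Good k2 c2 ->
  Good (k1 + k2) (fun al => c1 al + c2 al).
Proof.
move=> [x1 [y1 [h1 [h2 [h3 [h4 h5]]]]]] [x2 [y2 [g1 [g2 [g3 [g4 g5]]]]]].
exists (fun t => x1 t + x2 t), (fun t => y1 t + y2 t); split; last split; last split; last split.
- by move=> t ht; rewrite addr_ge0 ?h1 ?g1.
- by move=> t ht; rewrite addr_ge0 ?h2 ?g2.
- by move=> i hi; rewrite big_split /= h3 // g3 // mulrDl.
- by rewrite !big_split /= h4 g4.
- by move=> al hal; rewrite LL_add lerD ?h5 ?g5.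
Qed.

Lemma good_scale r k c : 0 <= r -> Good k c -> Good (r * k) (fun al => r * c al).
Proof.
move=> r0 [x [y [h1 [h2 [h3 [h4 h5]]]]]].
exists (fun t => r * x t), (fun t => r * y t); split; last split; last split; last split.
- by move=> t ht; rewrite mulr_ge0 ?h1.
- by move=> t ht; rewrite mulr_ge0 ?h2.
- by move=> i hi; rewrite -mulr_sumr h3 // mulrA.
- by rewrite -!mulr_sumr h4.
- by move=> al hal; rewrite LL_scale ler_wpM2l ?h5.
Qed.

Lemma good0 : Good 0 (fun _ => 0).
Proof.
exists (fun _ => 0), (fun _ => 0); split; last split; last split; last split.
- by [].
- by [].
- by move=> i hi; rewrite big1 ?mul0r.
- by rewrite !big1.
- by move=> al _; rewrite /LL !big1 ?subrr // => t _; rewrite mul0r.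
Qed.

Lemma good_sum (I : eqType) (s : seq I) (P : pred I) (k : I -> R) (c : I -> 'I_m -> R) :
  (forall j, P j -> Good (k j) (c j)) ->
  Good (\sum_(j <- s | P j) k j) (fun al => \sum_(j <- s | P j) c j al).
Proof.
move=> hj; elim: s => [|j s IH].
  by rewrite big_nil; apply: good_mono (good0) _ => al _; rewrite !big_nil.
rewrite big_cons; case: ifP => Pj.
  by apply: good_mono (good_add (hj _ Pj) IH) _ => al _; rewrite big_cons Pj.
by apply: good_mono IH _ => al _; rewrite big_cons Pj.
Qed.


Hypothesis hm : (3 <= m)%N.
Hypothesis hw0 : w 0%N = 1.
Hypothesis hwl : w m.-1 = 0.
Hypothesis hwm : forall k, (k.+1 < m)%N -> w k.+1 <= w k.
Hypothesis hba : b != a.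
Hypothesis hz : forall i, (i < m.-1)%N -> 0 <= z i.

Lemma wmono j k : (j <= k)%N -> (k < m)%N -> w k <= w j.
Proof.
elim: k => [|k IH] hjk hk; first by move: hjk; rewrite leqn0 => /eqP->.
move: hjk; rewrite leq_eqVlt => /orP[/eqP->//|]; rewrite ltnS => hjk.
exact: le_trans (hwm hk) (IH hjk (ltnW hk)).
Qed.

Lemma wle1 k : (k < m)%N -> w k <= 1.
Proof. by move=> hk; rewrite -hw0; apply: wmono. Qed.

Lemma wge0 k : (k < m)%N -> 0 <= w k.
Proof. by move=> hk; rewrite -hwl; apply: wmono => //; lia. Qed.

Lemma part_ba (F : {perm 'I_m} -> R) :
  \sum_(t : {perm 'I_m} | nat_of_ord (t a) == (t b).+1) F t =
  \sum_(i < m.-1) \sum_(t : {perm 'I_m} | (nat_of_ord (t b) == i) && (nat_of_ord (t a) == i.+1)) F t.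
Proof.
rewrite [RHS](eq_bigr (fun i : 'I_m.-1 => \sum_(t : {perm 'I_m}) (if (nat_of_ord (t b) == i) && (nat_of_ord (t a) == i.+1) then F t else 0))); last first.
  by move=> i _; rewrite big_mkcond.
rewrite exchange_big big_mkcond /=; apply: eq_bigr => t _.
case: eqP => h.
  have ht : (t b < m.-1)%N by have := ltn_ord (t a); rewrite h; lia.
  rewrite (bigD1 (Ordinal ht)) //= eqxx h eqxx /= big1 ?addr0 // => i hi.
  case: (nat_of_ord (t b) =P i) => [e|] //=.
  by move: hi; rewrite -(inj_eq val_inj) /= -e eqxx.
rewrite big1 // => i _; case: andP => // [[/eqP e1 /eqP e2]].
by exfalso; apply: h; rewrite e2 e1.
Qed.

Definition Zs := \sum_(i < m.-1) z i.

Lemma Zs_ge0 : 0 <= Zs.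
Proof. by apply: sumr_ge0 => i _; apply: hz. Qed.

Definition yv (Py : pred {perm 'I_m}) (t : {perm 'I_m}) : R :=
  if Py t then Zs / (#|Py|)%:R else 0.
Definition xv (Q : nat -> pred {perm 'I_m}) (t : {perm 'I_m}) : R :=
  if Q (t b) t then z (t b) / (#|Q (t b)|)%:R else 0.

Lemma sum_ind (P Q : pred {perm 'I_m}) (f : {perm 'I_m} -> R) (c : R) :
  (forall t, Q t -> P t) -> (exists t, Q t) ->
  (forall t, P t -> f t = if Q t then c / (#|Q|)%:R else 0) ->
  \sum_(t : {perm 'I_m} | P t) f t = c.
Proof.
move=> hQP [t0 ht0] hf.
rewrite (eq_bigr _ hf) -big_mkcondr.
rewrite (eq_bigl (fun t => t \in Q)); last by move=> t; rewrite -topredE /=; case: (boolP (Q t)) => [hq|]; rewrite ?andbF ?andbT ?hQP.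
have hc : (0 < #|Q|)%N by apply/card_gt0P; exists t0.
rewrite sumr_const -(mulr_natr (c / _)) divfK // pnatr_eq0 -lt0n //.
Qed.

Lemma xv_ge0 (Q : nat -> pred {perm 'I_m}) : (forall i t, Q i t -> (nat_of_ord (t b) == i) && (nat_of_ord (t a) == i.+1)) ->
  forall t, 0 <= xv Q t.
Proof.
move=> hQ t; rewrite /xv; case: ifP => // hq.
have /andP[_ /eqP e2] := hQ _ _ hq.
apply: divr_ge0; last exact: ler0n.
by apply: hz; have := ltn_ord (t a); rewrite e2; lia.
Qed.

Lemma yv_ge0 (Py : pred {perm 'I_m}) t : 0 <= yv Py t.
Proof. by rewrite /yv; case: ifP => // _; apply: divr_ge0 (Zs_ge0) (ler0n _ _). Qed.

Lemma xv_sumi (Q : nat -> pred {perm 'I_m}) : (forall i t, Q i t -> (nat_of_ord (t b) == i) && (nat_of_ord (t a) == i.+1)) ->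
  (forall i, (i < m.-1)%N -> exists t, Q i t) ->
  forall i, (i < m.-1)%N ->
  \sum_(t : {perm 'I_m} | (nat_of_ord (t b) == i) && (nat_of_ord (t a) == i.+1)) xv Q t = z i.
Proof.
move=> hQ hex i hi; apply: sum_ind; [exact: hQ | exact: hex | ].
by move=> t /andP[/eqP e _]; rewrite /xv e.
Qed.

Lemma yv_sum (Py : pred {perm 'I_m}) : (forall t, Py t -> nat_of_ord (t b) == 0%N) -> (exists t, Py t) ->
  \sum_(t : {perm 'I_m} | nat_of_ord (t b) == 0%N) yv Py t = Zs.
Proof. by move=> hP hex; apply: sum_ind; [exact: hP | exact: hex | by []]. Qed.

Lemma xv_sum (Q : nat -> pred {perm 'I_m}) : (forall i t, Q i t -> (nat_of_ord (t b) == i) && (nat_of_ord (t a) == i.+1)) ->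
  (forall i, (i < m.-1)%N -> exists t, Q i t) ->
  \sum_(t : {perm 'I_m} | nat_of_ord (t a) == (t b).+1) xv Q t = Zs.
Proof.
move=> hQ hex; rewrite part_ba; apply: eq_bigr => i _; exact: xv_sumi.
Qed.

Lemma cfg_good (Py : pred {perm 'I_m}) (Q : nat -> pred {perm 'I_m}) :
  (forall t, Py t -> nat_of_ord (t b) == 0%N) -> (exists t, Py t) ->
  (forall i t, Q i t -> (nat_of_ord (t b) == i) && (nat_of_ord (t a) == i.+1)) ->
  (forall i, (i < m.-1)%N -> exists t, Q i t) ->
  Good 1 (LL (xv Q) (yv Py)).
Proof.
move=> hP hPe hQ hQe; exists (xv Q), (yv Py); split; last split; last split; last split.
- by move=> t _; apply: xv_ge0.
- by move=> t _; apply: yv_ge0.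
- by move=> i hi; rewrite mul1r xv_sumi.
- by rewrite yv_sum // xv_sum.
- by [].
Qed.

Lemma LL_fixed (Py : pred {perm 'I_m}) (Q : nat -> pred {perm 'I_m}) (g : 'I_m) (p : nat) (q : nat -> nat) :
  (forall t, Py t -> nat_of_ord (t b) == 0%N) -> (exists t, Py t) ->
  (forall i t, Q i t -> (nat_of_ord (t b) == i) && (nat_of_ord (t a) == i.+1)) ->
  (forall i, (i < m.-1)%N -> exists t, Q i t) ->
  (forall t, Py t -> nat_of_ord (t g) = p) ->
  (forall i t, Q i t -> nat_of_ord (t g) = q i) ->
  LL (xv Q) (yv Py) g = Zs * (1 - w p) - \sum_(i < m.-1) z i * (w i - w (q i)).
Proof.
move=> hP hPe hQ hQe hPg hQg; rewrite /LL; congr (_ - _).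
  apply: (sum_ind (Q := Py)); [exact: hP | exact: hPe | ].
  move=> t _; rewrite /yv /sigma; case: ifP => ht; last by rewrite mul0r.
  by rewrite hPg // mulrAC.
rewrite part_ba; apply: eq_bigr => i _; apply: (sum_ind (Q := Q i)); [exact: hQ | exact: hQe; exact: ltn_ord | ].
move=> t /andP[/eqP e _]; rewrite /xv /sigma e; case: ifP => [hq|]; last by rewrite mul0r.
by rewrite (hQg _ _ hq) mulrAC.
Qed.

Lemma reindex_tp (P : pred {perm 'I_m}) (F : {perm 'I_m} -> R) (tau : {perm 'I_m}) :
  (forall t, P (tau * t)%g = P t) ->
  \sum_(t : {perm 'I_m} | P t) F t = \sum_(t : {perm 'I_m} | P t) F (tau * t)%g.
Proof.
move=> hP; rewrite (reindex_inj (mulgI tau)) /=; apply: eq_bigl => t; exact: hP.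
Qed.

Lemma LL_sym (x y : {perm 'I_m} -> R) (be ga : 'I_m) : be != a -> be != b -> ga != a -> ga != b ->
  (forall t, x (tperm be ga * t)%g = x t) -> (forall t, y (tperm be ga * t)%g = y t) ->
  LL x y be = LL x y ga.
Proof.
move=> ba' bb' ga' gb' hx hy.
have fa : tperm be ga a = a by rewrite tpermD // eq_sym.
have fb : tperm be ga b = b by rewrite tpermD // eq_sym.
rewrite /LL /sigma.
rewrite (@reindex_tp (fun t => nat_of_ord (t b) == 0%N) _ (tperm be ga)); last by move=> t; rewrite permM fb.
rewrite (@reindex_tp (fun t => nat_of_ord (t a) == (t b).+1) _ (tperm be ga)); last by move=> t; rewrite !permM fa fb.
congr (_ - _); apply: eq_bigr => t _; by rewrite ?hx ?hy !permM ?fb tpermL.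
Qed.

Lemma LL_total (x y : {perm 'I_m} -> R) :
  \sum_(t : {perm 'I_m} | nat_of_ord (t b) == 0%N) y t = \sum_(t : {perm 'I_m} | nat_of_ord (t a) == (t b).+1) x t ->
  (forall i, (i < m.-1)%N ->
     \sum_(t : {perm 'I_m} | (nat_of_ord (t b) == i) && (nat_of_ord (t a) == i.+1)) x t = z i) ->
  \sum_(al | al != b) LL x y al = m%:R * \sum_(i < m.-1) z i * (1 - w i).
Proof.
move=> hyx hx.
pose W := \sum_(j < m) w j.
have hW : forall t : {perm 'I_m}, \sum_al w (t al) = W.
  by move=> t; rewrite /W [RHS](reindex_inj (@perm_inj _ t)).
have hrest : forall f : 'I_m -> R, \sum_(al | al != b) f al = \sum_al f al - f b.
  by move=> f; rewrite [\sum_al f al](bigD1 b) //= addrC addrK.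
rewrite /LL sumrB.
rewrite exchange_big /= [X in _ - X]exchange_big /=.
have e1 : forall t : {perm 'I_m}, nat_of_ord (t b) == 0%N ->
    \sum_(al | al != b) y t * (1 - sigma w t al) = y t * (m%:R - W).
  move=> t /eqP ht; rewrite -mulr_sumr hrest sumrB hW sumr_const card_ord /sigma ht hw0.
  by rewrite subrr subr0.
have e2 : forall t : {perm 'I_m},
    \sum_(al | al != b) x t * (sigma w t b - sigma w t al) = x t * (m%:R * w (t b) - W).
  move=> t; rewrite -mulr_sumr hrest sumrB hW sumr_const card_ord /sigma subrr subr0.
  by rewrite mulr_natl.
rewrite (eq_bigr _ e1) (eq_bigr _ (fun t _ => e2 t)).
rewrite -mulr_suml hyx part_ba part_ba.
have e3 : forall i : 'I_m.-1,
  \sum_(t : {perm 'I_m} | (nat_of_ord (t b) == i) && (nat_of_ord (t a) == i.+1)) x t * (m%:R * w (t b) - W)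
  = z i * (m%:R * w i - W).
  move=> i; rewrite -[RHS]/(z i * (m%:R * w i - W)) -(hx i (ltn_ord i)) mulr_suml.
  by apply: eq_bigr => t /andP[/eqP -> _].
rewrite (eq_bigr _ (fun (i : 'I_m.-1) _ => e3 i)).
rewrite (eq_bigr (fun i : 'I_m.-1 => z i) (fun (i : 'I_m.-1) _ => hx i (ltn_ord i))).
rewrite mulr_suml mulr_sumr -sumrB; apply: eq_bigr => i _; ring.
Qed.

Lemma ex_perm2 (p q : nat) : (p < m)%N -> (q < m)%N -> p != q ->
  exists t : {perm 'I_m}, nat_of_ord (t b) = p /\ nat_of_ord (t a) = q.
Proof.
move=> hp hq pq; pose P := Ordinal hp; pose Q := Ordinal hq.
pose t1 := tperm b P.
have h1 : t1 a != P by rewrite -[P in _ != P](tpermL b P) (inj_eq perm_inj) eq_sym.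
have h2 : Q != P by rewrite -(inj_eq val_inj) /= eq_sym.
exists (t1 * tperm (t1 a) Q)%g; rewrite !permM tpermL tpermD // tpermL.
by [].
Qed.

Lemma ex_perm3 (g : 'I_m) (p q r : nat) : g != a -> g != b ->
  (p < m)%N -> (q < m)%N -> (r < m)%N -> p != q -> r != p -> r != q ->
  exists t : {perm 'I_m}, [/\ nat_of_ord (t b) = p, nat_of_ord (t a) = q & nat_of_ord (t g) = r].
Proof.
move=> ga gb hp hq hr pq rp rq.
have [t2 [e1 e2]] := ex_perm2 hp hq pq.
pose Rr := Ordinal hr.
have hgb : t2 g != t2 b by rewrite (inj_eq perm_inj).
have hga : t2 g != t2 a by rewrite (inj_eq perm_inj).
have hrb : Rr != t2 b by rewrite -(inj_eq val_inj) /= e1.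
have hra : Rr != t2 a by rewrite -(inj_eq val_inj) /= e2.
exists (t2 * tperm (t2 g) Rr)%g; rewrite !permM tpermL !tpermD // eq_sym //.
Qed.

Definition Aq := \sum_(i < m.-1) z i * (1 - w i + w i.+1).
Definition Sq := m%:R * \sum_(i < m.-1) z i * (1 - w i).
Definition low (i : nat) : nat := if (i.+2 < m)%N then m.-1 else (m - 3)%N.

Definition QT (i : nat) (t : {perm 'I_m}) : bool :=
  (nat_of_ord (t b) == i) && (nat_of_ord (t a) == i.+1).
Definition PyE (t : {perm 'I_m}) : bool :=
  (nat_of_ord (t b) == 0%N) && (nat_of_ord (t a) == m.-1).
Definition PyF (t : {perm 'I_m}) : bool :=
  (nat_of_ord (t b) == 0%N) && (nat_of_ord (t a) == 1%N).
Definition PyG (g : 'I_m) (t : {perm 'I_m}) : bool :=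
  [&& nat_of_ord (t b) == 0%N, nat_of_ord (t a) == m.-1 & nat_of_ord (t g) == 1%N].
Definition QG (g : 'I_m) (i : nat) (t : {perm 'I_m}) : bool :=
  [&& nat_of_ord (t b) == i, nat_of_ord (t a) == i.+1 & nat_of_ord (t g) == low i].

Lemma sumform (p : nat) (q : nat -> nat) :
  Zs * (1 - w p) - \sum_(i < m.-1) z i * (w i - w (q i)) =
  \sum_(i < m.-1) z i * (1 - w p - w i + w (q i)).
Proof. by rewrite /Zs mulr_suml -sumrB; apply: eq_bigr => i _; ring. Qed.

Lemma cardO : \sum_(al | (al != b) && (al != a)) (1 : R) = m%:R - 2.
Proof.
have h : \sum_(al : 'I_m) (1 : R) = m%:R by rewrite sumr_const card_ord.
move: h; rewrite (bigD1 b) //= (bigD1 a) /=; last by rewrite eq_sym.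
move=> h; lra.
Qed.

Lemma cardO3 (g : 'I_m) : g != a -> g != b ->
  \sum_(al | (al != b) && (al != a) && (al != g)) (1 : R) = m%:R - 3.
Proof.
move=> ga gb; have h := cardO; move: h; rewrite (bigD1 g) /=; last by rewrite gb ga.
move=> h; lra.
Qed.

Lemma sym2 (x y : {perm 'I_m} -> R) :
  \sum_(al | al != b) LL x y al = Sq ->
  (forall be ga, be != a -> be != b -> ga != a -> ga != b -> LL x y be = LL x y ga) ->
  forall be, be != a -> be != b -> (m%:R - 2) * LL x y be = Sq - LL x y a.
Proof.
move=> htot hs be ba' bb'; have hab : a != b by rewrite eq_sym.
rewrite -htot (bigD1 a) //= addrC addrK -cardO mulr_suml.
apply: eq_bigr => al /andP[h1 h2]; rewrite mul1r; exact: hs.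
Qed.

Lemma sym3 (x y : {perm 'I_m} -> R) (g : 'I_m) : g != a -> g != b ->
  \sum_(al | al != b) LL x y al = Sq ->
  (forall be ga, be != a -> be != b -> be != g -> ga != a -> ga != b -> ga != g ->
     LL x y be = LL x y ga) ->
  forall be, be != a -> be != b -> be != g ->
    (m%:R - 3) * LL x y be = Sq - LL x y a - LL x y g.
Proof.
move=> ga gb htot hs be ba' bb' bg; have hab : a != b by rewrite eq_sym.
rewrite -htot (bigD1 a) //= (bigD1 g) /=; last by rewrite gb ga.
rewrite -(cardO3 ga gb) mulr_suml.
have -> : \sum_(i | (i != b) && (i != a) && (i != g)) LL x y i =
          \sum_(i | (i != b) && (i != a) && (i != g)) 1 * LL x y be.
  by apply: eq_bigr => al /andP[/andP[h1 h2] h3]; rewrite mul1r; apply: hs.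
lra.
Qed.

Lemma xv_inv (Q : nat -> pred {perm 'I_m}) (tau : {perm 'I_m}) : tau b = b ->
  (forall i t, Q i (tau * t)%g = Q i t) -> forall t, xv Q (tau * t)%g = xv Q t.
Proof. by move=> hb hQ t; rewrite /xv permM hb hQ. Qed.

Lemma yv_inv (Py : pred {perm 'I_m}) (tau : {perm 'I_m}) :
  (forall t, Py (tau * t)%g = Py t) -> forall t, yv Py (tau * t)%g = yv Py t.
Proof. by move=> hP t; rewrite /yv hP. Qed.

Lemma cfg_total (Py : pred {perm 'I_m}) (Q : nat -> pred {perm 'I_m}) :
  (forall t, Py t -> nat_of_ord (t b) == 0%N) -> (exists t, Py t) ->
  (forall i t, Q i t -> (nat_of_ord (t b) == i) && (nat_of_ord (t a) == i.+1)) ->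
  (forall i, (i < m.-1)%N -> exists t, Q i t) ->
  \sum_(al | al != b) LL (xv Q) (yv Py) al = Sq.
Proof.
move=> hP hPe hQ hQe; rewrite LL_total /Sq //; first by rewrite yv_sum // xv_sum.
exact: xv_sumi.
Qed.

Lemma QT_ok : (forall i t, QT i t -> (nat_of_ord (t b) == i) && (nat_of_ord (t a) == i.+1)) /\
  (forall i, (i < m.-1)%N -> exists t, QT i t).
Proof.
split => // i hi; have [t [e1 e2]] := @ex_perm2 i i.+1 ltac:(lia) ltac:(lia) ltac:(lia).
by exists t; rewrite /QT e1 e2 !eqxx.
Qed.

Lemma fix_ab (be ga : 'I_m) : be != a -> be != b -> ga != a -> ga != b ->
  tperm be ga a = a /\ tperm be ga b = b.
Proof. by move=> *; rewrite !tpermD // eq_sym. Qed.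

Lemma cfgE : [/\ Good 1 (LL (xv QT) (yv PyE)), LL (xv QT) (yv PyE) a = Aq &
  forall be, be != a -> be != b -> (m%:R - 2) * LL (xv QT) (yv PyE) be = Sq - Aq].
Proof.
have [hQ hQe] := QT_ok.
have hP : forall t, PyE t -> nat_of_ord (t b) == 0%N by move=> t /andP[].
have hPe : exists t, PyE t.
  have [t [e1 e2]] := @ex_perm2 0 m.-1 ltac:(lia) ltac:(lia) ltac:(lia).
  by exists t; rewrite /PyE e1 e2 !eqxx.
have hLa : LL (xv QT) (yv PyE) a = Aq.
  rewrite (@LL_fixed _ _ a m.-1 S) //; first by rewrite sumform /Aq; apply: eq_bigr => i _; rewrite hwl; congr (_ * _); ring.
  - by move=> t /andP[_ /eqP].
  - by move=> i t /andP[_ /eqP].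
split => //; first exact: cfg_good.
rewrite -hLa; apply: sym2; first exact: cfg_total.
move=> be ga ba' bb' ga' gb'; have [fa fb] := fix_ab ba' bb' ga' gb'.
apply: LL_sym => //.
  by apply: xv_inv => // i t; rewrite /QT !permM fa fb.
by apply: yv_inv => t; rewrite /PyE !permM fa fb.
Qed.

Definition A1 := \sum_(i < m.-1) z i * (1 - w 1 - w i + w i.+1).

Lemma cfgF : [/\ Good 1 (LL (xv QT) (yv PyF)), LL (xv QT) (yv PyF) a = A1 &
  forall be, be != a -> be != b -> (m%:R - 2) * LL (xv QT) (yv PyF) be = Sq - A1].
Proof.
have [hQ hQe] := QT_ok.
have hP : forall t, PyF t -> nat_of_ord (t b) == 0%N by move=> t /andP[].
have hPe : exists t, PyF t.
  have [t [e1 e2]] := @ex_perm2 0 1 ltac:(lia) ltac:(lia) ltac:(lia).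
  by exists t; rewrite /PyF e1 e2 !eqxx.
have hLa : LL (xv QT) (yv PyF) a = A1.
  rewrite (@LL_fixed _ _ a 1 S) //; first by rewrite sumform.
  - by move=> t /andP[_ /eqP].
  - by move=> i t /andP[_ /eqP].
split => //; first exact: cfg_good.
rewrite -hLa; apply: sym2; first exact: cfg_total.
move=> be ga ba' bb' ga' gb'; have [fa fb] := fix_ab ba' bb' ga' gb'.
apply: LL_sym => //.
  by apply: xv_inv => // i t; rewrite /QT !permM fa fb.
by apply: yv_inv => t; rewrite /PyF !permM fa fb.
Qed.

Definition Vq := \sum_(i < m.-1) z i * (1 - w 1 - w i + w (low i)).

Lemma cfgG (g : 'I_m) : g != a -> g != b ->
  [/\ Good 1 (LL (xv (QG g)) (yv (PyG g))), LL (xv (QG g)) (yv (PyG g)) a = Aq,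
   LL (xv (QG g)) (yv (PyG g)) g = Vq &
  forall be, be != a -> be != b -> be != g ->
    (m%:R - 3) * LL (xv (QG g)) (yv (PyG g)) be = Sq - Aq - Vq].
Proof.
move=> ga gb.
have hQ : forall i t, QG g i t -> (nat_of_ord (t b) == i) && (nat_of_ord (t a) == i.+1).
  by move=> i t /and3P[-> -> _].
have hQe : forall i, (i < m.-1)%N -> exists t, QG g i t.
  move=> i hi; rewrite /QG /low; case: ifP => hl.
    have [t [e1 e2 e3]] := @ex_perm3 g i i.+1 m.-1 ga gb ltac:(lia) ltac:(lia) ltac:(lia) ltac:(lia) ltac:(lia) ltac:(lia).
    by exists t; rewrite e1 e2 e3 !eqxx.
  have [t [e1 e2 e3]] := @ex_perm3 g i i.+1 (m - 3) ga gb ltac:(lia) ltac:(lia) ltac:(lia) ltac:(lia) ltac:(lia) ltac:(lia).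
  by exists t; rewrite e1 e2 e3 !eqxx.
have hP : forall t, PyG g t -> nat_of_ord (t b) == 0%N by move=> t /and3P[].
have hPe : exists t, PyG g t.
  have [t [e1 e2 e3]] := @ex_perm3 g 0 m.-1 1 ga gb ltac:(lia) ltac:(lia) ltac:(lia) ltac:(lia) ltac:(lia) ltac:(lia).
  by exists t; rewrite /PyG e1 e2 e3 !eqxx.
have hLa : LL (xv (QG g)) (yv (PyG g)) a = Aq.
  rewrite (@LL_fixed _ _ a m.-1 S) //; first by rewrite sumform /Aq; apply: eq_bigr => i _; rewrite hwl; congr (_ * _); ring.
  - by move=> t /and3P[_ /eqP].
  - by move=> i t /and3P[_ /eqP].
have hLg : LL (xv (QG g)) (yv (PyG g)) g = Vq.
  rewrite (@LL_fixed _ _ g 1 low) //; first by rewrite sumform.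
  - by move=> t /and3P[_ _ /eqP].
  - by move=> i t /and3P[_ _ /eqP].
split => //; first exact: cfg_good.
rewrite -hLa -hLg; apply: sym3 => //; first exact: cfg_total.
move=> be ga' ba' bb' bg ga2 gb' gg.
have [fa fb] := fix_ab ba' bb' ga2 gb'.
have fg : tperm be ga' g = g by rewrite tpermD // eq_sym.
apply: LL_sym => //.
  by apply: xv_inv => // i t; rewrite /QG !permM fa fb fg.
by apply: yv_inv => t; rewrite /PyG !permM fa fb fg.
Qed.

Lemma M3 : 3%:R <= m%:R :> R.
Proof. by rewrite ler_nat. Qed.

Lemma A1_le : A1 <= Sq.
Proof.
rewrite /A1 /Sq mulr_sumr; apply: ler_sum => i _.
have zi := hz (ltn_ord i).
have w1 : w i.+1 <= w 1 by apply: wmono; have := ltn_ord i; lia.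
have wi : w i <= 1 by apply: wle1; have := ltn_ord i; lia.
have h1 : 0 <= z i * (1 - w i) by apply: mulr_ge0; lra.
have h2 : 0 <= z i * (w 1 - w i.+1) by apply: mulr_ge0; lra.
have := M3; nra.
Qed.

Lemma V_le : Vq <= Sq - Aq.
Proof.
rewrite /Vq /Sq /Aq mulr_sumr -sumrB; apply: ler_sum => i _.
have hi := ltn_ord i.
have zi := hz hi.
have wi : w i <= 1 by apply: wle1; lia.
have h1 : 0 <= z i * (1 - w i) by apply: mulr_ge0; lra.
have := M3; rewrite /low; case: ifP => hl hM.
  have w1 : w i.+1 <= w 1 by apply: wmono; lia.
  have h2 : 0 <= z i * (w 1 - w i.+1) by apply: mulr_ge0; lra.
  rewrite hwl; nra.
have -> : i.+1 = m.-1 by lia.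
have w1 : w i <= w 1 by apply: wmono; lia.
have w3 : w (m - 3)%N <= 1 by apply: wle1; lia.
have h2 : 0 <= z i * (w 1 - w i) by apply: mulr_ge0; lra.
have h3 : 0 <= z i * (1 - w (m - 3)%N) by apply: mulr_ge0; lra.
rewrite hwl; nra.
Qed.

Lemma four (g be : 'I_m) : g != a -> g != b -> be != a -> be != b -> be != g -> (4 <= m)%N.
Proof.
move=> ga gb ba' bb' bg.
have h1 : (a == b) = false by rewrite eq_sym (negbTE hba).
have h2 : (a == g) = false by rewrite eq_sym (negbTE ga).
have h3 : (a == be) = false by rewrite eq_sym (negbTE ba').
have h4 : (b == g) = false by rewrite eq_sym (negbTE gb).
have h5 : (b == be) = false by rewrite eq_sym (negbTE bb').
have h6 : (g == be) = false by rewrite eq_sym (negbTE bg).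
have hu : uniq [:: a; b; g; be] by rewrite /= !inE h1 h2 h3 h4 h5 h6.
have h : (#|[:: a; b; g; be]| <= #|'I_m|)%N by apply: subset_leq_card; apply/subsetP.
by rewrite card_ord (card_uniqP hu) in h.
Qed.

Lemma goodV1 : Sq < Aq -> Good 1 (fun al => if al == a then Sq else 0).
Proof.
move=> hSA.
have [gE hEa hEo] := cfgE; have [gF hFa hFo] := cfgF.
have hA1 := A1_le.
have hpos : 0 < Aq - A1 by lra.
set th := (Sq - A1) / (Aq - A1).
have hth : th * (Aq - A1) = Sq - A1 by rewrite /th divfK // gt_eqF.
have th0 : 0 <= th by apply: divr_ge0; lra.
have th1 : 0 <= 1 - th.
  by rewrite subr_ge0 /th ler_pdivrMr // mul1r; lra.
have h := good_add (good_scale th0 gE) (good_scale th1 gF).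
rewrite (_ : th * 1 + (1 - th) * 1 = 1) in h; last by ring.
apply: good_mono h _ => al hal; case: eqP => [->|/eqP ha].
  by rewrite hEa hFa; nra.
have e := hEo al ha hal; have f := hFo al ha hal.
have hM : m%:R - 2 != 0 :> R by apply: lt0r_neq0; have := M3; lra.
suff -> : th * LL (xv QT) (yv PyE) al + (1 - th) * LL (xv QT) (yv PyF) al = 0 by [].
apply: (mulfI hM); rewrite mulr0 mulrDr mulrCA e mulrCA f; nra.
Qed.

Lemma goodV2 (g : 'I_m) : g != a -> g != b -> Sq < Aq ->
  Good 1 (fun al => if al == a then Aq else if al == g then Sq - Aq else 0).
Proof.
move=> ga gb hSA.
have [gE hEa hEo] := cfgE; have [gG hGa hGg hGo] := cfgG ga gb.
have hV := V_le.
set u := Sq - Aq.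
have hu : u = Sq - Aq by [].
set e := LL (xv QT) (yv PyE) g.
have he : (m%:R - 2) * e = u by rewrite /e hEo.
have hM := M3.
have e0 : e <= 0.
  rewrite leNgt; apply/negP => he0.
  have : 0 < (m%:R - 2) * e by apply: mulr_gt0 => //; lra.
  rewrite he /u; lra.
have heu : u <= e.
  have : (m%:R - 2) * e - e = (m%:R - 3) * e by ring.
  have : 0 <= (m%:R - 3) * (- e) by apply: mulr_ge0; lra.
  rewrite /u in he *; nra.
set rho := (u - Vq) / (e - Vq).
have hrho : rho * (e - Vq) = u - Vq.
  case: (eqVneq (e - Vq) 0) => [h0|hn]; last by rewrite /rho divfK.
  by rewrite h0 mulr0; lra.
have r0 : 0 <= rho by apply: divr_ge0; lra.
have r1 : 0 <= 1 - rho.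
  case: (eqVneq (e - Vq) 0) => [h0|hn]; first by rewrite /rho h0 invr0 mulr0 subr0.
  by rewrite subr_ge0 /rho ler_pdivrMr ?mul1r; lra.
have h := good_add (good_scale r0 gE) (good_scale r1 gG).
rewrite (_ : rho * 1 + (1 - rho) * 1 = 1) in h; last by ring.
apply: good_mono h _ => al hal; case: eqP => [->|/eqP ha].
  by rewrite hEa hGa; lra.
case: eqP => [->|/eqP hg].
  by rewrite hGg -/e; nra.
have h4 := four ga gb ha hal hg.
have hM4 : 4%:R <= m%:R :> R by rewrite ler_nat.
have e1 := hEo al ha hal; have g1 := hGo al ha hal hg.
have eal : LL (xv QT) (yv PyE) al = e.
  apply: (mulfI (_ : m%:R - 2 != 0)); first by apply: lt0r_neq0; lra.
  by rewrite e1 he.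
rewrite eal.
set gv := LL (xv (QG g)) (yv (PyG g)) al.
have hev : 0 < e - Vq.
  have : (m%:R - 2) * e - e = (m%:R - 3) * e by ring.
  have : (m%:R - 2) * e - e = (m%:R - 3) * e by ring.
  have hlt : e < 0.
    rewrite ltNge; apply/negP => he0.
    have : 0 <= (m%:R - 2) * e by apply: mulr_ge0 => //; lra.
    rewrite he /u; lra.
  have : 0 < (m%:R - 3) * (- e) by apply: mulr_gt0; lra.
  rewrite /u in he hV *; nra.
have hX : (m%:R - 2) * (m%:R - 3) * (e - Vq) * (rho * e + (1 - rho) * gv) = 0.
  transitivity ((m%:R - 3) * ((rho * (e - Vq)) * ((m%:R - 2) * e)) +
     ((m%:R - 2) * e - (m%:R - 2) * Vq - (m%:R - 2) * (rho * (e - Vq))) * ((m%:R - 3) * gv)).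
    by ring.
  rewrite hrho he g1 hu; ring.
have hnz : (m%:R - 2) * (m%:R - 3) * (e - Vq) != 0 :> R.
  by rewrite !mulf_neq0 // lt0r_neq0 //; lra.
suff -> : rho * e + (1 - rho) * gv = 0 by [].
by apply: (mulfI hnz); rewrite mulr0.
Qed.

Lemma main_good (c : 'I_m -> R) : c a <= Aq ->
  (forall al, al != b -> al != a -> c al <= 0) ->
  \sum_(al | al != b) c al <= Sq -> Good 1 c.
Proof.
move=> hca hco hcs.
have hab : a != b by rewrite eq_sym.
have hM := M3.
case: (leP Aq Sq) => hAS.
  have [gE hEa hEo] := cfgE.
  apply: good_mono gE _ => al hal; case: (eqVneq al a) => [->|ha]; first by rewrite hEa.
  apply: le_trans (hco _ hal ha) _.
  have h := hEo al ha hal.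
  have hp : 0 < m%:R - 2 :> R by lra.
  by rewrite -(pmulr_rge0 _ hp) h subr_ge0.
set D := \sum_(al | (al != b) && (al != a)) (- c al).
have hD : 0 <= D by apply: sumr_ge0 => al /andP[h1 h2]; rewrite oppr_ge0 hco.
have hcsD : c a - D <= Sq.
  by move: hcs; rewrite (bigD1 a) //= /D sumrN opprK.
set Mx := if D <= Aq - Sq then Aq - Sq else D.
have hMx : 0 < Mx by rewrite /Mx; case: ifP => h; lra.
have hMx1 : Aq - Sq <= Mx by rewrite /Mx; case: ifP => h; lra.
have hMx2 : D <= Mx by rewrite /Mx; case: ifP => h; lra.
set lam := 1 - D / Mx.
have l0 : 0 <= lam by rewrite subr_ge0 ler_pdivrMr // mul1r.
have h1 := good_scale l0 (goodV1 hAS).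
have h2 := @good_sum _ (index_enum 'I_m) (fun be => (be != b) && (be != a))
  (fun be => (- c be / Mx) * 1)
  (fun be al => (- c be / Mx) * (if al == a then Aq else if al == be then Sq - Aq else 0)).
have h2' : Good (\sum_(be | (be != b) && (be != a)) (- c be / Mx) * 1)
  (fun al => \sum_(be | (be != b) && (be != a))
     (- c be / Mx) * (if al == a then Aq else if al == be then Sq - Aq else 0)).
  apply: h2 => be /andP[hb ha]; apply: good_scale; last exact: goodV2.
  by apply: divr_ge0; [rewrite oppr_ge0 hco | lra].
have hk : \sum_(be | (be != b) && (be != a)) (- c be / Mx) * 1 = D / Mx.
  by rewrite /D mulr_suml; apply: eq_bigr => be _; rewrite mulr1.
have h := good_add h1 h2'.
rewrite hk (_ : lam * 1 + D / Mx = 1) in h; last by rewrite /lam; ring.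
apply: good_mono h _ => al hal; case: (eqVneq al a) => [->|ha].
  rewrite -mulr_suml (_ : \sum_(be | (be != b) && (be != a)) (- c be / Mx) = D / Mx); last by rewrite /D mulr_suml.
  rewrite /lam.
  have hdm : D / Mx * Mx = D by rewrite divfK // gt_eqF.
  rewrite /Mx in hdm *; case: ifP => hc.
    have hdm' : D / (Aq - Sq) * (Aq - Sq) = D by rewrite divfK // gt_eqF // subr_gt0.
    nra.
  have hD0 : 0 < D by move/negbT: hc; rewrite -ltNge; lra.
  rewrite divff ?gt_eqF //; lra.
rewrite ?(negbTE ha) mulr0 add0r.
rewrite (bigD1 al) /=; last by rewrite hal ha.
rewrite eqxx big1 ?addr0; last by move=> be /andP[_ hbe]; rewrite eq_sym (negbTE hbe) mulr0.
have hd : 0 <= - c al by rewrite oppr_ge0 hco.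
have hq : (Aq - Sq) / Mx <= 1 by rewrite ler_pdivrMr // mul1r.
have : - c al * ((Aq - Sq) / Mx) <= - c al * 1 by rewrite ler_wpM2l.
rewrite mulr1 => hh.
have -> : - c al / Mx * (Sq - Aq) = - (- c al * ((Aq - Sq) / Mx)) by ring.
lra.
Qed.

End S.

Theorem theorem9 (R : realType) (m : nat) (w : nat -> R)
  (N : {perm 'I_m} -> nat) (n : nat) (a b : 'I_m) (z : nat -> R) :
  (3 <= m)%N ->
  w 0%N = 1 -> w m.-1 = 0 ->
  (forall k : nat, (k.+1 < m)%N -> w k.+1 <= w k) ->
  n = (\sum_(t : {perm 'I_m}) N t)%N ->
  (forall al : 'I_m, al != a -> score w N al < score w N a) ->
  b != a ->
  (forall al : 'I_m, al != a -> score w N al <= score w N b) ->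
  (forall i : nat, (i < m.-1)%N -> 0 <= z i) ->
  \sum_(i < m.-1) z i * (1 - w i + w i.+1) >= score w N a - score w N b ->
  \sum_(i < m.-1) z i * (1 - w i) >= n%:R * wbar m w - score w N b ->
  exists x y : {perm 'I_m} -> R,
    (forall t : {perm 'I_m}, nat_of_ord (t a) = (t b).+1 -> 0 <= x t) /\
    (forall t : {perm 'I_m}, nat_of_ord (t b) = 0%N -> 0 <= y t) /\
    (forall i : nat, (i < m.-1)%N ->
       \sum_(t : {perm 'I_m} | (nat_of_ord (t b) == i) && (nat_of_ord (t a) == i.+1)) x t = z i) /\
    \sum_(t : {perm 'I_m} | nat_of_ord (t b) == 0%N) y t
      = \sum_(t : {perm 'I_m} | nat_of_ord (t a) == (t b).+1) x t /\
    (forall al : 'I_m, al != b ->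
       \sum_(t : {perm 'I_m} | nat_of_ord (t b) == 0%N) y t * (1 - sigma w t al)
       - \sum_(t : {perm 'I_m} | nat_of_ord (t a) == (t b).+1) x t * (sigma w t b - sigma w t al)
       >= score w N al - score w N b).
Proof.
move=> hm hw0 hwl hwm hn hsa hba hsb hz h1 h2.
pose W := \sum_(j < m) w j.
have hW : forall t : {perm 'I_m}, \sum_al w (t al) = W.
  by move=> t; rewrite /W [RHS](reindex_inj (@perm_inj _ t)).
have hsum : \sum_al score w N al = n%:R * W.
  rewrite /score exchange_big /= hn natr_sum mulr_suml; apply: eq_bigr => t _.
  by rewrite -mulr_sumr hW.
have hS : \sum_(al | al != b) (score w N al - score w N b) <= Sq m w z.
  have e1 : \sum_al (score w N al - score w N b) =
            \sum_(al | al != b) (score w N al - score w N b).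
    by rewrite (bigD1 b) //= subrr add0r.
  rewrite -e1 sumrB hsum sumr_const card_ord /Sq.
  have hm0 : m%:R != 0 :> R by rewrite pnatr_eq0 -lt0n; lia.
  have hwb : m%:R * (n%:R * wbar m w) = n%:R * W.
    by rewrite /wbar -/W mulrCA [m%:R * _]mulrCA divff // mulr1.
  have hmp : 0 <= m%:R :> R by apply: ler0n.
  have := ler_wpM2l hmp h2; rewrite mulrBr hwb.
  rewrite -[score w N b *+ m]mulr_natl; lra.
have hG : @Good R m w a b z 1 (fun al => score w N al - score w N b).
  apply: main_good; solve [exact: h1 | by move=> al hal ha; rewrite subr_le0 hsb | done | assumption].
case: hG => x [y [H1 [H2 [H3 [H4 H5]]]]].
exists x, y; split => //; split => //; split.
  by move=> i hi; rewrite H3 // mul1r.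
by split => // al hal; apply: H5.
Qed.
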